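(* Let $d_1,d_2$ be positive integers with $2\leq d_1\leq d_2$. Then $$\binom{d_1+d_2}{d_1}\leq 2d_1d_2$$ if and only if $d_1=2$ and $d_2\leq 4$. *)

(* Defs.v *)
From mathcomp Require Export all_boot.

(* Main.v *)
Require Import Defs.
From mathcomp Require Import all_boot.
From mathcomp Require Import zify.

Lemma bin2x2 n : 'C(n.+1, 2) * 2 = n.+1 * n.
Proof.
elim: n => [|n IH]; first by [].
rewrite binS bin1 mulnDl IH; lia.
Qed.

Lemma base3 {b} : 3 <= b -> 6 * b < 'C(b + 3, 3).
Proof.
elim: b => [|b IH] //.
rewrite leq_eqVlt => /orP [/eqP <- // | hb].
have := IH hb.
rewrite addSn binS.
have : 'C(4, 2) <= 'C(b + 3, 2) by apply: leq_bin2l; lia.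
change 'C(4,2) with 6. lia.
Qed.

Lemma binC n m : 'C(n + m, n) = 'C(n + m, m).
Proof. by have := bin_sub (leq_addl n m); rewrite addnK. Qed.

Lemma gen k : forall b, 3 <= b -> 2 * (k + 3) * b < 'C(k + 3 + b, k + 3).
Proof.
elim: k => [|k IH] b hb.
  rewrite add0n addnC. have := base3 hb. lia.
elim: b hb => [|b IHb] hb //.
rewrite leq_eqVlt in hb; case/orP: hb => [/eqP hb | hb].
  rewrite -hb binC.
  have := base3 (_ : 3 <= k.+1 + 3); rewrite leq_addl => /(_ isT).
  lia.
have h1 := IH b.+1 (ltnW hb).
have h2 := IHb hb.
have -> : k.+1 + 3 + b.+1 = (k + 3 + b.+1).+1 by lia.
have -> : k.+1 + 3 = (k + 3).+1 by lia.
rewrite binS.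
have -> : k + 3 + b.+1 = (k + 3).+1 + b by lia.
move: h2; have -> : k.+1 + 3 = (k + 3).+1 by lia.
move=> h2; clear IHb IH.
have E : (k + 3).+1 + b = k + 3 + b.+1 by lia.
rewrite {2}E; nia.
Qed.

Theorem lemmaA3 (d1 d2 : nat) (h2 : 2 <= d1) (h12 : d1 <= d2) :
  'C(d1 + d2, d1) <= 2 * d1 * d2 <-> d1 = 2 /\ d2 <= 4.
Proof.
case: d1 h2 h12 => [|[|[|k]]] // _ h12.
  have := bin2x2 (d2.+1).
  rewrite (_ : 2 + d2 = d2.+2) // => E.
  split; [move=> H; split => //; nia | case=> _ H; nia].
have hd : 3 <= d2 by lia.
have H := gen k d2 hd; rewrite addn3 in H.
split; [lia | by case].
Qed.
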